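(* Let $d_m\ge1$, let $n,k$ be integers with $k\ge\ell(d_m)$ and $n\ge k+\ell(d_m)+2d_m$, let $n'=n-k-\ell(d_m)-2d_m$, and let $\mathcal C_2(n,k,1,d_m)=\{0^k\vec u1^{d_m}\vec c1^{d_m}:\vec c\in\mathcal C_H\}$, where $\mathcal C_H\subseteq\{0,1\}^{n'}$ is any code all of whose words are $(d_m,k)$-WWL vectors. Then $\mathcal C_2(n,k,1,d_m)$ is prefix synchronized with the set $H=\{0^k\vec u\}$ and index $\rho=d_m$.
   Context: Binary alphabet; juxtaposition is concatenation; $(\vec x)_i^j=(x_i,\dots,x_j)$; $d_H$ is Hamming distance. A vector of length $m$ is a $(d,k)$-WWL vector if $m<k$ or every window of $k$ consecutive entries has Hamming weight at least $d$. $\ell(d)=d\lceil\log_2 d\rceil+d$ and $\vec u=1^d\vec u_0\cdots\vec u_{\lceil\log_2 d\rceil-1}\in\{0,1\}^{\ell(d)}$, where $\vec u_i$ is the length-$d$ prefix of $(1^{2^i}0^{2^i})^d$; here $d=d_m$. A code $\mathcal C\subseteq\{0,1\}^n$ is prefix synchronized with a set $H\subseteq\{0,1\}^m$ ($m\le n$) and index $\rho$ if for all $\vec a\in\mathcal C$, $\vec h\in H$ and $i\in[2,n]$, $d_H((\vec a\vec h)_i^{i+m-1},\vec h)\ge\rho$. *)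

(* Defs.v *)
(* Binary vectors are modelled as bit sequences (seq bool);
   a code is a predicate on seq bool. Indices in [window] are 1-based as in the paper. *)
From mathcomp Require Import all_boot.
Set Implicit Arguments. Unset Strict Implicit. Unset Printing Implicit Defensive.

Definition dH (x y : seq bool) : nat := count (fun p => p.1 != p.2) (zip x y).

Definition wt (x : seq bool) : nat := count id x.

Definition window (x : seq bool) (i m : nat) : seq bool := take m (drop i.-1 x).

Definition WWL (d k : nat) (x : seq bool) : Prop :=
  size x < k \/ (forall i, 1 <= i -> i + k - 1 <= size x -> d <= wt (window x i k)).

Definition ell (d : nat) : nat := d * up_log 2 d + d.

Definition ui (d i : nat) : seq bool :=
  take d (flatten (nseq d (nseq (2 ^ i) true ++ nseq (2 ^ i) false))).

Definition uvec (d : nat) : seq bool :=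
  nseq d true ++ flatten [seq ui d i | i <- iota 0 (up_log 2 d)].

Definition C2 (k d : nat) (CH : seq bool -> Prop) (a : seq bool) : Prop :=
  exists c, CH c /\ a = nseq k false ++ uvec d ++ nseq d true ++ c ++ nseq d true.

Definition prefix_synchronized (n m : nat) (C H : seq bool -> Prop) (rho : nat) : Prop :=
  (forall a, C a -> size a = n) /\ (forall h, H h -> size h = m) /\ m <= n /\
  forall a h i, C a -> H h -> 2 <= i <= n -> rho <= dH (window (a ++ h) i m) h.

(* Main.v *)
Require Import Defs.
From mathcomp Require Import all_boot zify.
Set Implicit Arguments. Unset Strict Implicit.

Lemma count_shift (P : pred nat) a b :
  count P (iota a b) = count (fun y => P (a + y)) (iota 0 b).
Proof. by rewrite -{1}(addn0 a) iotaDl count_map. Qed.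

Lemma count_sub (P : pred nat) a b N : a + b <= N ->
  count P (iota a b) <= count P (iota 0 N).
Proof.
move=> H; have -> : N = a + b + (N - (a + b)) by lia.
rewrite iotaD count_cat iotaD count_cat /= add0n; lia.
Qed.

Lemma count_sub2 (P : pred nat) a1 b1 a2 b2 N : a1 + b1 <= a2 -> a2 + b2 <= N ->
  count P (iota a1 b1) + count P (iota a2 b2) <= count P (iota 0 N).
Proof.
move=> H1 H2; have -> : N = a1 + b1 + (a2 - (a1 + b1)) + b2 + (N - (a2 + b2)) by lia.
rewrite !iotaD !count_cat /= add0n.
have -> : a1 + b1 + (a2 - (a1 + b1)) = a2 by lia.
rewrite !add0n; lia.
Qed.

Lemma count_true (P : pred nat) a b :
  (forall j, a <= j -> j < a + b -> P j) -> count P (iota a b) = b.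
Proof.
move=> H; rewrite -[RHS](size_iota a b) -count_predT.
apply: eq_in_count => j; rewrite mem_iota => /andP[h1 h2]; exact: H.
Qed.


Lemma size_flat_unif (T : Type) D (ss : seq (seq T)) :
  all (fun s => size s == D) ss -> size (flatten ss) = size ss * D.
Proof.
elim: ss => [|s ss IH] //= /andP[/eqP Hs Ha]; rewrite size_cat Hs IH //; lia.
Qed.

Lemma nth_flat_unif (T : Type) (x0 : T) D (ss : seq (seq T)) y :
  0 < D -> all (fun s => size s == D) ss -> y < size ss * D ->
  nth x0 (flatten ss) y = nth x0 (nth [::] ss (y %/ D)) (y %% D).
Proof.
move=> D0; elim: ss y => [|s ss IH] y /=; first by rewrite mul0n.
move=> /andP[/eqP Hs Ha] Hy; rewrite nth_cat Hs.
case: (ltnP y D) => Hy'.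
  by rewrite divn_small // modn_small.
have -> : y = 1 * D + (y - D) by lia.
rewrite divnMDl // modnMDl add1n /= IH //.
  by have -> : 1 * D + (y - D) - D = y - D by lia.
have -> : 1 * D + (y - D) - D = y - D by lia. lia.
Qed.

Definition bitf (i z : nat) : bool := ~~ odd (z %/ 2 ^ i).

Lemma bit_mod P z : 0 < P -> (z %% (P + P) < P) = ~~ odd (z %/ P).
Proof.
move=> P0; rewrite {2}(divn_eq z (P + P)).
have hr : z %% (P + P) < P + P by apply: ltn_pmod; lia.
set q := z %/ (P + P); set r := z %% (P + P) in hr *.
have -> : q * (P + P) + r = (q * 2) * P + r by lia.
rewrite divnMDl // oddD oddM andbF /=.
case: (ltnP r P) => Hr; first by rewrite divn_small.
have -> : r = 1 * P + (r - P) by lia.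
by rewrite divnMDl // divn_small //; lia.
Qed.

Lemma size_ui d i : size (ui d i) = d.
Proof.
rewrite /ui size_take (@size_flat_unif _ (2 ^ i + 2 ^ i)) ?size_nseq.
  have : 0 < 2 ^ i by rewrite expn_gt0.
  case: ifP => //; nia.
by apply/allP => s /nseqP [-> _]; rewrite size_cat !size_nseq.
Qed.

Lemma nth_ui d i z : z < d -> nth false (ui d i) z = bitf i z.
Proof.
move=> Hz; have P0 : 0 < 2 ^ i by rewrite expn_gt0.
rewrite /ui nth_take // (@nth_flat_unif _ _ (2 ^ i + 2 ^ i)).
- rewrite nth_nseq.
  have -> : z %/ (2 ^ i + 2 ^ i) < d.
    apply: leq_ltn_trans Hz; apply: leq_div.
  rewrite nth_cat size_nseq nth_nseq.
  have H3 : z %% (2^i+2^i) < 2^i+2^i by apply: ltn_pmod; lia.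
  case: ifP => H1; first by rewrite /bitf -bit_mod // H1.
  rewrite nth_nseq; case: ifP => H2; last by lia.
  by rewrite /bitf -bit_mod // H1.
- lia.
- by apply/allP => s /nseqP [-> _]; rewrite size_cat !size_nseq.
- rewrite size_nseq; nia.
Qed.

Lemma all_ui d p : all (fun s => size s == d) [seq ui d i | i <- iota 0 p].
Proof. by apply/allP => s /mapP [i _ ->]; rewrite size_ui. Qed.

Lemma size_u d : size (uvec d) = ell d.
Proof.
rewrite /uvec /ell size_cat size_nseq (size_flat_unif (all_ui d _)) size_map size_iota; lia.
Qed.

Lemma U_lo d y : y < d -> nth false (uvec d) y = true.
Proof. by move=> H; rewrite /uvec nth_cat size_nseq H nth_nseq H. Qed.

Lemma U_hi d y : ell d <= y -> nth false (uvec d) y = false.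
Proof. by move=> H; rewrite nth_default // size_u. Qed.

Lemma U_blk d i z : i < up_log 2 d -> z < d ->
  nth false (uvec d) (d + i * d + z) = bitf i z.
Proof.
move=> Hi Hz; have d0 : 0 < d by lia.
rewrite /uvec nth_cat size_nseq ifF; last by lia.
have -> : d + i * d + z - d = i * d + z by lia.
rewrite (@nth_flat_unif _ false d) //; last by rewrite size_map size_iota; nia.
  2: exact: all_ui.
rewrite divnMDl // (divn_small Hz) addn0 -modnDm modnMl add0n modn_mod (modn_small Hz).
by rewrite (nth_map 0) ?size_iota // nth_iota // nth_ui.
Qed.

Lemma odd_decomp r : 0 < r -> exists b m, r = (2 * m + 1) * 2 ^ b.
Proof.
elim/ltn_ind: r => r IH r0.
case Ho: (odd r).
  exists 0, r./2; rewrite expn0 muln1.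
  have := odd_double_half r; rewrite Ho -muln2; lia.
have Hr := odd_double_half r; rewrite Ho add0n -muln2 in Hr.
have [b [m Hbm]] := IH r./2 (ltac:(lia)) (ltac:(lia)).
by exists b.+1, m; rewrite expnS; lia.
Qed.

Lemma bitf_flip b m z : bitf b (z + (2 * m + 1) * 2 ^ b) = ~~ bitf b z.
Proof.
rewrite /bitf addnC divnMDl ?expn_gt0 // oddD oddD oddM /=.
by case: (odd _).
Qed.

Lemma autocorr d r : 0 < r -> r < d ->
  d - r <= count (fun y => nth false (uvec d) y != nth false (uvec d) (y + r))
                 (iota 0 (ell d - r)).
Proof.
move=> r0 rd.
have [b [m Hbm]] := odd_decomp r0.
have Hb : b < up_log 2 d.
  rewrite ltnNge; apply/negP => Hpb.
  have h1 := @up_logP 2 d (isT : 1 < 2).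
  have h2 : 2 ^ up_log 2 d <= 2 ^ b by rewrite leq_exp2l.
  have h3 : 2 ^ b <= r by rewrite Hbm; apply: leq_pmull; lia.
  lia.
apply: (leq_trans _ (@count_sub _ (d + b * d) (d - r) _ _)).
  rewrite count_true // => j h1 h2.
  have -> : j = d + b * d + (j - (d + b * d)) by lia.
  rewrite U_blk //; last by lia.
  have -> : d + b * d + (j - (d + b * d)) + r = d + b * d + (j - (d + b * d) + r) by lia.
  rewrite U_blk //; last by lia.
  by rewrite Hbm bitf_flip; case: (bitf _ _).
rewrite /ell; nia.
Qed.

Lemma bit_weight i d : d <= 2 * count (bitf i) (iota 0 d).
Proof.
have P0 : 0 < 2 ^ i by rewrite expn_gt0.
elim/ltn_ind: d => d IH.
case: (leqP d (2 ^ i + 2 ^ i)) => Hd.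
  have H := @count_sub (bitf i) 0 (minn d (2 ^ i)) d (ltac:(lia)).
  rewrite count_true in H; first by lia.
  by move=> j _ hj; rewrite /bitf divn_small //; lia.
have -> : d = (2 ^ i + 2 ^ i) + (d - (2 ^ i + 2 ^ i)) by lia.
rewrite iotaD count_cat add0n (count_shift _ (2 ^ i + 2 ^ i)).
have E : count (fun y => bitf i (2 ^ i + 2 ^ i + y)) (iota 0 (d - (2 ^ i + 2 ^ i)))
       = count (bitf i) (iota 0 (d - (2 ^ i + 2 ^ i))).
  apply: eq_count => y; rewrite /bitf.
  have -> : 2 ^ i + 2 ^ i + y = 2 * 2 ^ i + y by lia.
  by rewrite divnMDl // oddD.
rewrite E.
have H := @count_sub (bitf i) 0 (2 ^ i) (2 ^ i + 2 ^ i) (ltac:(lia)).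
rewrite count_true in H; last by move=> j _ hj; rewrite /bitf divn_small //; lia.
have := IH (d - (2 ^ i + 2 ^ i)) (ltac:(lia)); lia.
Qed.

Lemma Wblocks d t j : 0 < d -> j + t = up_log 2 d ->
  t * d <= 2 * count (nth false (uvec d)) (iota (d + j * d) (t * d)).
Proof.
move=> d0; elim: t j => [|t IH] j Hjt; first by rewrite mul0n.
have -> : t.+1 * d = d + t * d by rewrite mulSn.
rewrite iotaD count_cat.
have -> : d + j * d + d = d + j.+1 * d by rewrite mulSn; lia.
have H1 := IH j.+1 (ltac:(lia)).
rewrite count_shift.
have E : count (fun y => nth false (uvec d) (d + j * d + y)) (iota 0 d) = count (bitf j) (iota 0 d).
  apply: eq_in_count => y; rewrite mem_iota => /andP[_ hy].
  by rewrite U_blk //; lia.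
rewrite E; have := bit_weight j d; lia.
Qed.

Lemma W_bound d : 0 < d -> d - 1 <= count (nth false (uvec d)) (iota d (up_log 2 d * d)).
Proof.
move=> d0; have H := @Wblocks d (up_log 2 d) 0 d0 (ltac:(lia)).
rewrite mul0n addn0 in H.
have h1 := @up_logP 2 d (isT : 1 < 2).
case: (leqP d 1) => Hd1; first by lia.
case: (leqP d 2) => Hd2.
  have : 0 < up_log 2 d by rewrite up_log_gt0.
  nia.
have : 1 < up_log 2 d.
  rewrite ltnNge; apply/negP => Hp.
  have : 2 ^ up_log 2 d <= 2 ^ 1 by rewrite leq_exp2l.
  rewrite expn1; lia.
nia.
Qed.

Lemma W'_bound d : 1 < d -> d - 2 <= count (nth false (uvec d)) (iota (d + d) ((up_log 2 d).-1 * d)).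
Proof.
move=> d1; have hp : 0 < up_log 2 d by rewrite up_log_gt0.
have H := @Wblocks d (up_log 2 d).-1 1 (ltac:(lia)) (ltac:(lia)).
rewrite mul1n in H.
have h1 := @up_logP 2 d (isT : 1 < 2).
case: (leqP (up_log 2 d) 2) => Hp.
  have : 2 ^ up_log 2 d <= 2 ^ 2 by rewrite leq_exp2l.
  move=> h2; move: H h1 h2 hp Hp; set p := up_log 2 d.
  case: p => [|[|[|p]]] //= H h1 h2 hp Hp; rewrite ?expn1 in h1 h2 *; try lia.
have : 2 * d <= (up_log 2 d).-1 * d by apply: leq_mul; lia.
lia.
Qed.

Lemma count_sub3 (P : pred nat) a1 b1 a2 b2 a3 b3 N : a1 + b1 <= a2 -> a2 + b2 <= a3 ->
  a3 + b3 <= N ->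
  count P (iota a1 b1) + count P (iota a2 b2) + count P (iota a3 b3) <= count P (iota 0 N).
Proof.
move=> H1 H2 H3.
have -> : N = a1 + b1 + (a2 - (a1 + b1)) + b2 + (a3 - (a2 + b2)) + b3 + (N - (a3 + b3)) by lia.
rewrite !iotaD !count_cat /= !add0n.
have -> : a1 + b1 + (a2 - (a1 + b1)) = a2 by lia.
have -> : a2 + b2 + (a3 - (a2 + b2)) = a3 by lia.
lia.
Qed.

Lemma window_map x i m : i.-1 + m <= size x ->
  window x i m = map (nth false x) (iota i.-1 m).
Proof.
move=> H; apply: (@eq_from_nth _ false).
  by rewrite size_map size_iota /window size_take size_drop; case: ifP; lia.
move=> j; rewrite /window size_take size_drop => Hj.
have Hj' : j < m by move: Hj; case: ifP; lia.
by rewrite nth_take // nth_drop (nth_map 0) ?size_iota // nth_iota.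
Qed.

Lemma dH_count f g a m :
  dH (map f (iota a m)) (map g (iota 0 m)) = count (fun j => f (a + j) != g j) (iota 0 m).
Proof.
by rewrite -{1}(addn0 a) iotaDl -map_comp /dH zip_map count_map.
Qed.

Definition Aseq d k (c : seq bool) :=
  (nseq k false ++ uvec d ++ nseq d true ++ c ++ nseq d true) ++ (nseq k false ++ uvec d).

Lemma A_reg d k c x : nth false (Aseq d k c) x =
  if x < k then false else if x < k + ell d then nth false (uvec d) (x - k)
  else if x < k + ell d + d then true
  else if x < k + ell d + d + size c then nth false c (x - (k + ell d + d))
  else if x < k + ell d + d + size c + d then true
  else if x < k + ell d + d + size c + d + k then false
  else nth false (uvec d) (x - (k + ell d + d + size c + d + k)).
Proof.
rewrite /Aseq; move: (size_u d); move: (uvec d) (ell d) => u L Hu.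
rewrite !nth_cat !size_cat !size_nseq Hu !nth_nseq.
repeat (case: ifP => ?); try lia; try done; f_equal; lia.
Qed.

Lemma H_reg d k j : nth false (nseq k false ++ uvec d) j =
  if j < k then false else nth false (uvec d) (j - k).
Proof. by rewrite nth_cat size_nseq nth_nseq; case: (ltnP j k). Qed.

Lemma ell_ge d : d <= ell d.
Proof. rewrite /ell; lia. Qed.

Lemma iota_split m a N : a <= N -> iota m N = iota m a ++ iota (m + a) (N - a).
Proof. by move=> H; rewrite -iotaD subnKC. Qed.

Ltac sol := rewrite ?A_reg ?H_reg; repeat (case: ifP => ?); try lia; try done.

Lemma core d k c s : 0 < d -> ell d <= k ->
  (size c < k \/ forall z0, z0 + k <= size c -> d <= count (nth false c) (iota z0 k)) ->
  0 < s -> s < k + ell d + d + size c + d ->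
  d <= count (fun j => nth false (Aseq d k c) (s + j) != nth false (nseq k false ++ uvec d) j)
             (iota 0 (k + ell d)).
Proof.
move=> d0 hk hW s0 sN; have hLd := ell_ge d.
set P := fun j => _.
case: (ltnP s k) => hsk.
  case: (leqP d s) => hds.
    apply: (leq_trans _ (@count_sub P (k - s) d (k + ell d) (ltac:(lia)))).
    rewrite count_true // => j h1 h2; rewrite /P; sol.
    by rewrite U_lo //; lia.
  apply: (leq_trans _ (@count_sub2 P (k - s) s k (ell d - s) (k + ell d) (ltac:(lia)) (ltac:(lia)))).
  rewrite count_true; last first.
    move=> j h1 h2; rewrite /P; sol. by rewrite U_lo //; lia.
  rewrite count_shift.
  have H := autocorr s0 hds.
  rewrite (@eq_in_count _ (fun y => P (k + y)) (fun y => nth false (uvec d) y != nth false (uvec d) (y + s))).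
    apply: (leq_trans _ (leq_add (leqnn s) H)); lia.
  move=> y /[!mem_iota] /andP[_ hy]; rewrite /P; sol.
  have -> : s + (k + y) - k = y + s by lia.
  have -> : k + y - k = y by lia.
  by rewrite eq_sym.
set N := k + ell d + d + size c + d in sN *.
case: (ltnP (N - d) s) => hC5.
  have r0 : 0 < N - s by lia.
  have rd : N - s < d by lia.
  apply: (leq_trans _ (@count_sub2 P 0 (N - s) (k + (N - s)) (ell d - (N - s)) (k + ell d) (ltac:(lia)) (ltac:(lia)))).
  rewrite count_true; last by move=> j h1 h2; rewrite /P /N; sol.
  rewrite count_shift.
  have H := autocorr r0 rd.
  rewrite (@eq_in_count _ (fun y => P (k + (N - s) + y)) (fun y => nth false (uvec d) y != nth false (uvec d) (y + (N - s)))).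
    apply: (leq_trans _ (leq_add (leqnn (N - s)) H)); lia.
  move=> y /[!mem_iota] /andP[_ hy]; rewrite /P /N; sol.
  have -> : s + (k + (k + ell d + d + size c + d - s) + y) - (k + ell d + d + size c + d + k) = y by lia.
  by have -> : k + (k + ell d + d + size c + d - s) + y - k = y + (k + ell d + d + size c + d - s) by lia.
case: (leqP N (s + k)) => hC4.
  apply: (leq_trans _ (@count_sub P (N - d - s) d (k + ell d) (ltac:(lia)))).
  by rewrite count_true // => j h1 h2; rewrite /P /N; sol.
case: (ltnP s (k + ell d)) => hC2.
  case: (ltnP (s - k) d) => ht.
    apply: (leq_trans _ (@count_sub2 P 0 (d - (s - k)) (ell d - (s - k)) (s - k) (k + ell d) (ltac:(lia)) (ltac:(lia)))).
    rewrite count_true; last by move=> j h1 h2; rewrite /P /N; sol; rewrite U_lo //; lia.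
    rewrite count_true; last by move=> j h1 h2; rewrite /P /N; sol.
    lia.
  apply: (leq_trans _ (@count_sub P (ell d - (s - k)) d (k + ell d) (ltac:(lia)))).
  by rewrite count_true // => j h1 h2; rewrite /P /N; sol.
have HR : count (fun j => nth false (Aseq d k c) (s + j)) (iota 0 k) <= count P (iota 0 (k + ell d)).
  apply: (leq_trans _ (@count_sub P 0 k (k + ell d) (ltac:(lia)))).
  rewrite (@eq_in_count _ _ P) //.
  move=> j /[!mem_iota] /andP[_ hj]; rewrite /P H_reg hj.
  by case: (nth _ _ _).
case: (leqP k (size c)) => hnk.
  case: hW => [hc|Wc]; first by lia.
  apply: (leq_trans _ HR).
  case: (leqP (s - (k + ell d)) d) => hta.
    rewrite (@iota_split 0 (d - (s - (k + ell d))) k); last by lia.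
    rewrite count_cat add0n count_true; last by move=> j h1 h2; rewrite /N; sol.
    rewrite count_shift.
    have H0 := Wc 0 (ltac:(lia)).
    rewrite (@iota_split 0 (k - (d - (s - (k + ell d)))) k) in H0; last by lia.
    rewrite count_cat add0n in H0.
    have E1 : k - (k - (d - (s - (k + ell d)))) = d - (s - (k + ell d)) by lia.
    rewrite E1 in H0.
    have H1 := count_size (nth false c) (iota (k - (d - (s - (k + ell d)))) (d - (s - (k + ell d)))).
    rewrite size_iota in H1.
    rewrite (@eq_in_count _ _ (nth false c)); first by move: H0 H1; set A1 := count _ (iota 0 _); set A2 := count _ (iota (k - _) _); lia.
    move=> y /[!mem_iota] /andP[_ hy]; rewrite /N; sol.
    by f_equal; lia.
  case: (leqP (s - (k + ell d) + k) (d + size c)) => htb.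
    have H0 := Wc (s - (k + ell d) - d) (ltac:(lia)).
    rewrite count_shift in H0.
    rewrite (@eq_in_count _ _ (fun y => nth false c (s - (k + ell d) - d + y))); first exact: H0.
    move=> y /[!mem_iota] /andP[_ hy]; rewrite /N; sol.
    by f_equal; lia.
  set t := s - (k + ell d) in hta htb *.
  rewrite (@iota_split 0 (size c + d - t) k); last by lia.
  rewrite count_cat add0n.
  rewrite [X in _ <= _ + X]count_true; last by move=> j h1 h2; rewrite /N /t; sol.
  have H0 := Wc (size c - k) (ltac:(lia)).
  rewrite (@iota_split (size c - k) (t - d - (size c - k)) k) in H0; last by lia.
  rewrite count_cat in H0.
  have E1 : size c - k + (t - d - (size c - k)) = t - d by lia.
  have E2 : k - (t - d - (size c - k)) = size c + d - t by lia.
  rewrite E1 E2 in H0.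
  have H1 := count_size (nth false c) (iota (size c - k) (t - d - (size c - k))).
  rewrite size_iota in H1.
  rewrite (count_shift _ (t - d)) in H0.
  rewrite (@eq_in_count _ _ (fun y => nth false c (t - d + y))); first by move: H0 H1; set A1 := count _ (iota 0 _); set A2 := count _ (iota (size c - k) _); lia.
  move=> y /[!mem_iota] /andP[_ hy]; rewrite /N /t; sol.
  by f_equal; lia.
have Ed : ell d - d = up_log 2 d * d by rewrite /ell; lia.
have HU : forall o, o <= ell d -> (forall y, y < ell d - o -> nth false (Aseq d k c) (s + (k + o + y)) = false) ->
  count (fun y => P (k + o + y)) (iota 0 (ell d - o)) = count (nth false (uvec d)) (iota o (ell d - o)).
  move=> o ho Hy; rewrite (count_shift _ o); apply: eq_in_count => y /[!mem_iota] /andP[_ hy].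
  rewrite /P Hy; last by lia.
  rewrite H_reg ifF; last by lia.
  have -> : k + o + y - k = o + y by lia.
  by case: (nth _ _ _).
case: (ltnP (N - (s + k)) d) => hq1.
  apply: (leq_trans _ (@count_sub3 P (k - (d - (N - (s + k)))) (d - (N - (s + k))) (k + (N - (s + k))) (d - (N - (s + k))) (k + d) (ell d - d) (k + ell d) (ltac:(lia)) (ltac:(lia)) (ltac:(lia)))).
  rewrite count_true; last by move=> j h1 h2; rewrite /P /N; sol.
  rewrite count_true; last by move=> j h1 h2; rewrite /P /N; sol; rewrite U_lo //; lia.
  rewrite (count_shift _ (k + d)) HU; first last.
  - by move=> y hy; rewrite /N; sol.
  - lia.
  have := W_bound d0; rewrite -Ed; lia.
have hp : 0 < up_log 2 d -> True by [].
case: (leqP (N - (s + k)) d) => hq2.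
  apply: (leq_trans _ (@count_sub2 P 0 (d - (s - (k + ell d))) (k + d) (ell d - d) (k + ell d) (ltac:(lia)) (ltac:(lia)))).
  rewrite count_true; last by move=> j h1 h2; rewrite /P /N; sol.
  rewrite (count_shift _ (k + d)) HU; first last.
  - by move=> y hy; rewrite /N; sol.
  - lia.
  have := W_bound d0; rewrite -Ed; lia.
have d1 : 1 < d by lia.
have hp1 : 0 < up_log 2 d by rewrite up_log_gt0 d1.
have Ed2 : ell d - (d + d) = (up_log 2 d).-1 * d.
  rewrite /ell; case: (up_log 2 d) hp1 => [|p] //= _; nia.
have hL2 : d + d <= ell d by rewrite /ell; nia.
apply: (leq_trans _ (@count_sub2 P 0 (d - (s - (k + ell d))) (k + (d + d)) (ell d - (d + d)) (k + ell d) (ltac:(lia)) (ltac:(lia)))).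
rewrite count_true; last by move=> j h1 h2; rewrite /P /N; sol.
rewrite (count_shift _ (k + (d + d))) HU; first last.
- by move=> y hy; rewrite /N; sol.
- lia.
have := W'_bound d1; rewrite -Ed2; lia.
Qed.

Theorem theorem9 (dm n k : nat) (CH : seq bool -> Prop) :
  1 <= dm -> ell dm <= k -> k + ell dm + 2 * dm <= n ->
  (forall c, CH c -> size c = n - k - ell dm - 2 * dm /\ WWL dm k c) ->
  prefix_synchronized n (k + ell dm) (C2 k dm CH)
    (fun h => h = nseq k false ++ uvec dm) dm.
Proof.
move=> d0 hk hn HC.
split; [|split; [|split]].
- move=> a [c [Hc ->]]; have [Hs _] := HC c Hc.
  move: (size_u dm); move: (uvec dm) => u Hu; rewrite !size_cat !size_nseq Hu Hs; lia.
- by move=> h ->; rewrite size_cat size_nseq (size_u dm).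
- lia.
- move=> a h i [c [Hc ->]] -> /andP[hi1 hi2].
  have [Hs HW] := HC c Hc.
  have E : (nseq k false ++ uvec dm ++ nseq dm true ++ c ++ nseq dm true) ++ (nseq k false ++ uvec dm) = Aseq dm k c by [].
  rewrite E window_map; last by rewrite /Aseq; move: (size_u dm); move: (uvec dm) => u Hu; rewrite !size_cat !size_nseq Hu Hs; lia.
  rewrite -[X in dH _ X](mkseq_nth false) /mkseq size_cat size_nseq size_u dH_count.
  apply: core => //; try lia.
  case: HW => [hw|hw]; [by left | right => z0 hz].
  have := hw z0.+1 (ltac:(lia)) (ltac:(lia)).
  by rewrite /wt window_map //= count_map.
Qed.
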